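(* With the notation of the context, let $\lambda>0$ and define $\mathcal{G}_\lambda(x):=\{g(y): y\in\mathcal{C}_\lambda(x)\}$ and $\mathcal{G}(x):=\{g(y): y\in\mathcal{C}(x)\}$. For every $x$ such that $\hat y(x)\in\mathcal{C}(x)$, we have $\mathcal{G}_\lambda(x)\subseteq\mathcal{G}(x)$.
   Context: Classification with $C$ classes, labels in $[C]=\{1,\dots,C\}$. A classifier outputs a softmax vector $\hat\pi(x)\in\mathbb{R}^C$ and predicted class $\hat y(x)=\arg\max_i \hat\pi_i(x)$. A map $g:[C]\to[G]$ partitions the classes into $G$ groups. Define $d(y,y'):=\mathbb{I}\{g(y)\neq g(y')\}$. Given any real-valued score function $s(x,y)$ and $\lambda>0$, define the penalized score $s_\lambda(x,y):=s(x,y)+\lambda\, d(y,\hat y(x))$. Given a calibration set $\{(x_i,y_i)\}_{i=1}^n$ and $\alpha\in(0,1)$ with $\lceil (n+1)(1-\alpha)\rceil\le n$, $\hat q$ (resp. $\hat q_\lambda$) is the $\lceil (n+1)(1-\alpha)\rceil$-th smallest value of $\{s(x_i,y_i)\}_{i=1}^n$ (resp. $\{s_\lambda(x_i,y_i)\}_{i=1}^n$). Prediction sets: $\mathcal{C}(x)=\{y: s(x,y)\le\hat q\}$, $\mathcal{C}_\lambda(x)=\{y: s_\lambda(x,y)\le\hat q_\lambda\}$. *)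

(* Defs.v *)
From mathcomp Require Import all_boot all_order all_algebra.
Set Implicit Arguments. Unset Strict Implicit. Unset Printing Implicit Defensive.
Import Order.TTheory GRing.Theory Num.Theory.
Local Open Scope ring_scope.

Section ConformalDefs.
Variables (R : archiRealFieldType) (X : Type) (C G : nat).

Definition gdist (g : 'I_C -> 'I_G) (y y' : 'I_C) : R :=
  if g y != g y' then 1 else 0.

Definition pen_score (g : 'I_C -> 'I_G) (yhat : X -> 'I_C)
  (s : X -> 'I_C -> R) (lambda : R) (x : X) (y : 'I_C) : R :=
  s x y + lambda * gdist g y (yhat x).

(* k-th smallest value (k >= 1) of the multiset {v i | i < n} *)
Definition kth_smallest (n k : nat) (v : 'I_n -> R) : R :=
  nth 0 (sort <=%R [seq v i | i <- enum 'I_n]) k.-1.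

Definition qindex (n : nat) (alpha : R) : int :=
  Num.ceil ((n.+1)%:R * (1 - alpha)).

Definition conf_quantile (n : nat) (alpha : R) (sc : X -> 'I_C -> R)
  (xs : 'I_n -> X) (ys : 'I_n -> 'I_C) : R :=
  kth_smallest (absz (qindex n alpha)) (fun i => sc (xs i) (ys i)).

Definition pred_set (sc : X -> 'I_C -> R) (q : R) (x : X) : {set 'I_C} :=
  [set y | sc x y <= q].

Definition group_set (g : 'I_C -> 'I_G) (S : {set 'I_C}) : {set 'I_G} :=
  g @: S.

End ConformalDefs.

(* Main.v *)
Require Import Defs.
From mathcomp Require Import all_boot all_order all_algebra.
Import Order.TTheory GRing.Theory Num.Theory.
Local Open Scope ring_scope.

Lemma kth_shift (R : realDomainType) n k (v w : 'I_n -> R) (c : R) :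
  (k < n)%N -> (forall i, v i <= w i + c) ->
  nth 0 (sort <=%R [seq v i | i <- enum 'I_n]) k <=
  nth 0 (sort <=%R [seq w i | i <- enum 'I_n]) k + c.
Proof.
move=> kn hvw.
set a := sort _ [seq v i | i <- _]; set b := sort _ [seq w i | i <- _].
have sa : size a = n by rewrite size_sort size_map size_enum_ord.
have sb : size b = n by rewrite size_sort size_map size_enum_ord.
have soa : sorted <=%R a by apply: sort_sorted; exact: le_total.
have sob : sorted <=%R b by apply: sort_sorted; exact: le_total.
rewrite leNgt; apply/negP => H.
set t := nth 0 a k in H.
have ca : (count (fun z : R => (z < t)%R) a <= k)%N.
  rewrite -(cat_take_drop k a) count_cat.
  have -> : count (fun z : R => (z < t)%R) (drop k a) = 0%N.
    apply/eqP; rewrite -leqn0 leqNgt -has_count; apply/hasP => -[z zin zP].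
    have : all (fun z : R => t <= z) (drop k a).
      apply/(all_nthP 0) => j; rewrite size_drop sa => jn.
      rewrite nth_drop; apply: (le_sorted_leq_nth 0 soa).
      - by rewrite inE sa.
      - by rewrite inE sa -ltn_subRL.
      - exact: leq_addr.
    by move/allP/(_ z zin); rewrite leNgt zP.
  by rewrite addn0 (leq_trans (count_size _ _)) // size_take sa kn.
have cb : (k.+1 <= count (fun z : R => (z + c < t)%R) b)%N.
  rewrite -(cat_take_drop k.+1 b) count_cat.
  apply: leq_trans (leq_addr _ _).
  have -> : count (fun z : R => (z + c < t)%R) (take k.+1 b) = size (take k.+1 b).
    apply/eqP; rewrite -all_count; apply/(all_nthP 0) => j.
    rewrite size_takel ?sb // => jk.
    rewrite nth_take //; apply: le_lt_trans H; rewrite lerD2r.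
    apply: (le_sorted_leq_nth 0 sob).
    - by rewrite inE sb (leq_trans jk).
    - by rewrite inE sb.
    - by [].
  by rewrite size_takel ?sb.
have : (count (fun z : R => (z + c < t)%R) b <= count (fun z : R => (z < t)%R) a)%N.
  have pa : perm_eq a [seq v i | i <- enum 'I_n] by rewrite /a perm_sort.
  have pb : perm_eq b [seq w i | i <- enum 'I_n] by rewrite /b perm_sort.
  rewrite (permP pa) (permP pb).
  rewrite !count_map; apply: sub_count => i /=.
  exact: le_lt_trans (hvw i).
move=> h; have := leq_trans cb (leq_trans h ca); by rewrite ltnn.
Qed.

Theorem corollary1 (R : archiRealFieldType) (X : Type) (C G n : nat)
  (g : 'I_C -> 'I_G) (pihat : X -> 'I_C -> R) (yhat : X -> 'I_C)
  (pihat_ge0 : forall x i, 0 <= pihat x i)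
  (pihat_sum1 : forall x, \sum_(i < C) pihat x i = 1)
  (yhat_argmax : forall x i, pihat x i <= pihat x (yhat x))
  (s : X -> 'I_C -> R) (lambda alpha : R)
  (lambda_gt0 : 0 < lambda) (alpha_gt0 : 0 < alpha) (alpha_lt1 : alpha < 1)
  (xs : 'I_n -> X) (ys : 'I_n -> 'I_C)
  (hidx : (qindex n alpha <= n%:Z)%R) (x : X) :
  let qhat := conf_quantile alpha s xs ys in
  let slam := pen_score g yhat s lambda in
  let qhat_lam := conf_quantile alpha slam xs ys in
  yhat x \in pred_set s qhat x ->
  group_set g (pred_set slam qhat_lam x) \subset group_set g (pred_set s qhat x).
Proof.
move=> qhat slam qhat_lam hy.
have q0 : 0 < qindex n alpha.
  by rewrite /qindex ceil_gt0 mulr_gt0 // ?ltr0n // subr_gt0.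
have kn : ((absz (qindex n alpha)).-1 < n)%N.
  move: q0 hidx; case: (qindex n alpha) => // m.
  rewrite lez_nat ltz_nat /= => m0 mn.
  by rewrite prednK.
have hq : qhat_lam <= qhat + lambda.
  rewrite /qhat_lam /qhat /conf_quantile /kth_smallest.
  apply: kth_shift => // i.
  rewrite /slam /pen_score /gdist lerD2l.
  by case: ifP => _; rewrite ?mulr1 ?mulr0 // ltW.
apply/subsetP => gy /imsetP [y yin ->].
case: (eqVneq (g y) (g (yhat x))) => hg.
  by rewrite hg; apply: imset_f.
apply: imset_f.
move: yin; rewrite !inE /slam /pen_score /gdist hg mulr1 => hle.
by rewrite -(lerD2r lambda) (le_trans hle hq).
Qed.
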